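(* Let $n,m\ge1$ and let $S=\{a_1,\dots,a_n,b_1,\dots,b_m\}$ be the poset whose only strict relations are $a_i<b_j$ for all $i=1,\dots,n$, $j=1,\dots,m$. Then every stochastically monotone generator on $S$ is realizably monotone. *)

(* Defs.v *)
From HB Require Import structures.
From mathcomp Require Import all_boot all_order all_algebra.
Set Implicit Arguments. Unset Strict Implicit. Unset Printing Implicit Defensive.
Import Order.TTheory GRing.Theory Num.Theory.
Local Open Scope ring_scope.

Definition is_generator (R : realFieldType) (T : finType) (Q : T -> T -> R) :=
  (forall x y : T, x != y -> 0 <= Q x y) /\ (forall x : T, \sum_(y : T) Q x y = 0).

Definition is_upset (T : finType) (le : rel T) (U : {set T}) :=
  forall x y : T, le x y -> x \in U -> y \in U.

(* Stochastic monotonicity of a generator (Massey's characterisation of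
   monotonicity of the semigroup exp(tQ)): for x <= y and every up-set U
   containing both or neither of x,y, Q(x,U) <= Q(y,U). *)
Definition stoch_monotone_gen (R : realFieldType) (T : finType) (le : rel T)
    (Q : T -> T -> R) :=
  forall (x y : T) (U : {set T}), le x y -> is_upset le U ->
    (x \in U) = (y \in U) ->
    \sum_(z in U) Q x z <= \sum_(z in U) Q y z.

Definition monotone_map (T : finType) (le : rel T) (f : {ffun T -> T}) : bool :=
  [forall x, forall y, le x y ==> le (f x) (f y)].

Definition realizably_monotone_gen (R : realFieldType) (T : finType) (le : rel T)
    (Q : T -> T -> R) :=
  exists c : {ffun T -> T} -> R,
    (forall f, 0 <= c f) /\ (forall f, ~~ monotone_map le f -> c f = 0) /\
    (forall x y : T, x != y -> Q x y = \sum_(f : {ffun T -> T} | f x == y) c f).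

(* The poset S = {a_1..a_n, b_1..b_m}, a_i = inl i, b_j = inr j, whose only
   strict relations are a_i < b_j. *)
Definition bip_le (n m : nat) : rel ('I_n + 'I_m)%type :=
  fun s t => match s, t with
             | inl i, inl i' => i == i'
             | inr j, inr j' => j == j'
             | inl _, inr _ => true
             | inr _, inl _ => false
             end.

(* Main.v *)
Require Import Defs.
From HB Require Import structures.
From mathcomp Require Import all_boot all_order all_algebra.
Set Implicit Arguments. Unset Strict Implicit. Unset Printing Implicit Defensive.
Import Order.TTheory GRing.Theory Num.Theory.
Local Open Scope ring_scope.

Definition jmp (T : finType) (x y : T) : {ffun T -> T} :=
  [ffun z => if z == x then y else z].

Definition sl n m (x y : 'I_n + 'I_m) : bool :=
  match x, y with inl _, inl _ | inr _, inr _ => true | _, _ => false end.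

Lemma bip_refl n m (x : 'I_n + 'I_m) : bip_le x x.
Proof. by case: x => /=. Qed.

Lemma eq_inl n m (i i' : 'I_n) : (inl i == inl i' :> 'I_n + 'I_m) = (i == i').
Proof. by []. Qed.
Lemma eq_inr n m (i i' : 'I_m) : (inr i == inr i' :> 'I_n + 'I_m) = (i == i').
Proof. by []. Qed.
Lemma eq_lr n m (i : 'I_n) (i' : 'I_m) : (inl i == inr i' :> 'I_n + 'I_m) = false.
Proof. by []. Qed.
Lemma eq_rl n m (i : 'I_n) (i' : 'I_m) : (inr i' == inl i :> 'I_n + 'I_m) = false.
Proof. by []. Qed.

Lemma jmp_mono n m (x y : 'I_n + 'I_m) : sl x y -> monotone_map (@bip_le n m) (jmp x y).
Proof.
move=> Hs; apply/forallP => u; apply/forallP => v; apply/implyP.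
case: u => [i|j]; case: v => [i'|j'] //=.
- by move/eqP => <-; exact: bip_refl.
- move=> _; rewrite !ffunE; case: x Hs => [a|a]; case: y => [b|b] //= _.
  + by case: ifP.
  + by case: ifP.
- by move/eqP => <-; exact: bip_refl.
Qed.

Definition gX n m (k : 'I_m) (s : {ffun 'I_n -> bool}) : {ffun 'I_n + 'I_m -> 'I_n + 'I_m} :=
  [ffun z => match z with inl i => if s i then inr k else inl i | inr _ => inr k end].
Definition gY n m (k : 'I_n) (s : {ffun 'I_m -> bool}) : {ffun 'I_n + 'I_m -> 'I_n + 'I_m} :=
  [ffun z => match z with inl _ => inl k | inr j => if s j then inl k else inr j end].

Lemma gX_mono n m k s : monotone_map (@bip_le n m) (gX k s).
Proof.
apply/forallP => u; apply/forallP => v; apply/implyP.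
case: u => [i|j]; case: v => [i'|j'] //=.
- by move/eqP => <-; exact: bip_refl.
- by move=> _; rewrite !ffunE; case: (s i) => /=.
- by move/eqP => <-; exact: bip_refl.
Qed.

Lemma gY_mono n m k s : monotone_map (@bip_le n m) (gY k s).
Proof.
apply/forallP => u; apply/forallP => v; apply/implyP.
case: u => [i|j]; case: v => [i'|j'] //=.
- by move/eqP => <-; exact: bip_refl.
- by move=> _; rewrite !ffunE; case: (s j') => /=.
- by move/eqP => <-; exact: bip_refl.
Qed.
Definition Wp (R : ringType) (I : finType) (p : I -> R) (s : {ffun I -> bool}) :=
  \prod_l (if s l then p l else 1 - p l).

Lemma Wp_tot (R : comRingType) (I : finType) (p : I -> R) :
  \sum_s Wp p s = 1.
Proof.
pose F l (b : bool) := if b then p l else 1 - p l.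
have E := @bigA_distr_bigA R 0 1 *%R +%R I bool F.
rewrite /Wp; rewrite /F /= in E; rewrite -E.
by apply: big1 => l _; rewrite big_bool /= addrC subrK.
Qed.

Lemma Wp_marg (R : comRingType) (I : finType) (p : I -> R) (i : I) :
  \sum_(s : {ffun I -> bool} | s i) Wp p s = p i.
Proof.
pose F l (b : bool) := if l == i then (if b then p l else 0) else (if b then p l else 1 - p l).
rewrite big_mkcond /= (eq_bigr (fun s : {ffun I -> bool} => \prod_l F l (s l))); last first.
  move=> s _; rewrite /Wp (bigD1 i) //= [in RHS](bigD1 i) //= /F eqxx.
  case: (s i); rewrite ?mul0r //; congr (_ * _); apply: eq_bigr => l /negbTE -> //.
have E := @bigA_distr_bigA R 0 1 *%R +%R I bool F.
rewrite -E (bigD1 i) //= [X in _ * X]big1 ?mulr1.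
  by rewrite big_bool /F eqxx /= addr0.
by move=> l /negbTE Hl; rewrite big_bool /F Hl /= addrC subrK.
Qed.

Lemma sum_pick (R : ringType) (T : finType) (P : pred T) (g : T) (a : R) :
  \sum_(f | P f) (a * (f == g)%:R) = if P g then a else 0.
Proof.
rewrite big_mkcond /= (eq_bigr (fun f => if f == g then (if P g then a else 0) else 0)).
  by rewrite -big_mkcond big_pred1_eq.
by move=> f _; case: eqP => [->|_]; case: (P _); rewrite ?mulr1 ?mulr0.
Qed.

Lemma le_bigmax (R : realDomainType) (I : finType) (F : I -> R) j :
  F j <= \big[Order.max/0]_i F i.
Proof.
have: forall r, j \in r -> F j <= \big[Order.max/0]_(i <- r) F i.
  elim=> // x r IH; rewrite inE big_cons; case/orP => [/eqP->|/IH H].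
    by rewrite le_max lexx.
  by rewrite le_max H orbT.
by apply; exact: mem_index_enum.
Qed.

Lemma bigmax_le (R : realDomainType) (I : finType) (F : I -> R) c :
  0 <= c -> (forall i, F i <= c) -> \big[Order.max/0]_i F i <= c.
Proof. by move=> c0 Hc; elim/big_ind: _ => // x y Hx Hy; rewrite ge_max Hx Hy. Qed.

Lemma bigmax_ge0 (R : realDomainType) (I : finType) (F : I -> R) :
  0 <= \big[Order.max/0]_i F i.
Proof. by elim/big_rec: _ => // i x _ Hx; rewrite le_max Hx orbT. Qed.

Lemma sum_induced (R : ringType) (T I : finType) (w : I -> R) (g : I -> {ffun T -> T}) u v :
  \sum_(f : {ffun T -> T} | f u == v) \sum_t w t * (f == g t)%:R
  = \sum_t (if g t u == v then w t else 0).
Proof.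
rewrite exchange_big; apply: eq_bigr => t _; exact: (sum_pick (fun f : {ffun T -> T} => f u == v)).
Qed.

Lemma divr01 (R : realFieldType) (a M : R) : 0 <= a -> a <= M -> 0 <= a / M <= 1.
Proof.
move=> Ha HaM; case: (eqVneq M 0) => [->|HM]; first by rewrite invr0 mulr0 lexx ler01.
have Mp : 0 < M by rewrite lt_def HM (le_trans Ha HaM).
by rewrite divr_ge0 ?(ltW Mp) //= ler_pdivrMr // mul1r.
Qed.

Lemma Wp_ge0 (R : realFieldType) (I : finType) (p : I -> R) s :
  (forall i, 0 <= p i <= 1) -> 0 <= Wp p s.
Proof.
move=> Hp; apply: prodr_ge0 => l _; have /andP[H0 H1] := Hp l.
by case: (s l); rewrite ?subr_ge0.
Qed.

Lemma MW_marg (R : realFieldType) (I : finType) (al : I -> R) M i :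
  (forall l, 0 <= al l <= M) ->
  \sum_(s : {ffun I -> bool} | s i) M * Wp (fun l => al l / M) s = al i.
Proof.
move=> H; rewrite -mulr_sumr Wp_marg.
case: (eqVneq M 0) => [M0|HM]; last by rewrite mulrCA divff ?mulr1.
by have /andP[H0 H1] := H i; rewrite M0 mul0r; apply/eqP; rewrite eq_le H0 -M0 H1.
Qed.

Lemma MW_tot (R : realFieldType) (I : finType) (al : I -> R) M :
  \sum_(s : {ffun I -> bool}) M * Wp (fun l => al l / M) s = M.
Proof. by rewrite -mulr_sumr Wp_tot mulr1. Qed.
Definition MX (R : realFieldType) n m (Q : 'I_n + 'I_m -> 'I_n + 'I_m -> R) (k : 'I_m) : R :=
  \big[Order.max/0]_(i : 'I_n) Q (inl i) (inr k).
Definition NY (R : realFieldType) n m (Q : 'I_n + 'I_m -> 'I_n + 'I_m -> R) (k : 'I_n) : R :=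
  \big[Order.max/0]_(j : 'I_m) Q (inr j) (inl k).
Definition rr (R : realFieldType) n m (Q : 'I_n + 'I_m -> 'I_n + 'I_m -> R) (u v : 'I_n + 'I_m) : R :=
  if u == v then 0 else
  match u, v with
  | inl _, inl k => Q u v - NY Q k
  | inr _, inr k => Q u v - MX Q k
  | _, _ => 0 end.
Definition Jw (R : realFieldType) n m (Q : 'I_n + 'I_m -> 'I_n + 'I_m -> R)
  (p : ('I_n + 'I_m) * ('I_n + 'I_m)) := rr Q p.1 p.2.
Definition Jg n m (p : ('I_n + 'I_m) * ('I_n + 'I_m)) := jmp p.1 p.2.
Definition wX (R : realFieldType) n m (Q : 'I_n + 'I_m -> 'I_n + 'I_m -> R)
  (p : 'I_m * {ffun 'I_n -> bool}) :=
  MX Q p.1 * Wp (fun i => Q (inl i) (inr p.1) / MX Q p.1) p.2.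
Definition wY (R : realFieldType) n m (Q : 'I_n + 'I_m -> 'I_n + 'I_m -> R)
  (p : 'I_n * {ffun 'I_m -> bool}) :=
  NY Q p.1 * Wp (fun j => Q (inr j) (inl p.1) / NY Q p.1) p.2.
Definition Xg n m (p : 'I_m * {ffun 'I_n -> bool}) := gX p.1 p.2.
Definition Yg n m (p : 'I_n * {ffun 'I_m -> bool}) := gY p.1 p.2.

Definition cc (R : realFieldType) n m (Q : 'I_n + 'I_m -> 'I_n + 'I_m -> R)
  (f : {ffun 'I_n + 'I_m -> 'I_n + 'I_m}) : R :=
  \sum_p Jw Q p * (f == Jg p)%:R + \sum_p wX Q p * (f == Xg p)%:R
  + \sum_p wY Q p * (f == Yg p)%:R.

Lemma J_val (R : realFieldType) n m (Q : 'I_n + 'I_m -> 'I_n + 'I_m -> R) u v : u != v ->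
  \sum_p (if Jg p u == v then Jw Q p else 0) = rr Q u v.
Proof.
move=> Huv; rewrite (eq_bigr (fun p => if p == (u, v) then Jw Q p else 0)).
  by rewrite -big_mkcond big_pred1_eq.
case=> x y _; rewrite /Jg /= ffunE xpair_eqE.
case: (eqVneq u x) => [<-|Hux] /=; first by [].
by rewrite (negbTE Huv).
Qed.

Lemma XA (R : realFieldType) n m (Q : 'I_n + 'I_m -> 'I_n + 'I_m -> R) i i' : i != i' ->
  \sum_p (if Xg p (inl i) == inl i' then wX Q p else 0) = 0.
Proof.
move=> H; apply: big1 => p _; rewrite /Xg ffunE.
by case: (p.2 i) => /=; rewrite ?eq_rl ?eq_inl ?(negbTE H).
Qed.

Lemma XC (R : realFieldType) n m (Q : 'I_n + 'I_m -> 'I_n + 'I_m -> R) j i :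
  \sum_p (if Xg p (inr j) == inl i then wX Q p else 0) = 0.
Proof. by apply: big1 => p _; rewrite /Xg ffunE. Qed.

Lemma XB (R : realFieldType) n m (Q : 'I_n + 'I_m -> 'I_n + 'I_m -> R) i k :
  (forall l, 0 <= Q (inl l) (inr k)) ->
  \sum_p (if Xg p (inl i) == inr k then wX Q p else 0) = Q (inl i) (inr k).
Proof.
move=> H0.
rewrite -(pair_bigA _ (fun k' s => if Xg (k', s) (inl i) == inr k then wX Q (k', s) else 0)) /=.
rewrite (bigD1 k) //= [X in _ + X]big1 ?addr0; last first.
  move=> k' Hk; apply: big1 => s _; rewrite /Xg ffunE /=.
  by case: (s i) => //=; rewrite ?eq_inr ?eq_inl ?eq_lr ?eq_rl (negbTE Hk).
rewrite -[RHS](@MW_marg _ _ (fun l => Q (inl l) (inr k)) (MX Q k) i); last first.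
  by move=> l; rewrite H0 /MX le_bigmax.
rewrite [RHS]big_mkcond /=; apply: eq_bigr => s _; rewrite /Xg /wX ffunE /=.
by case: (s i) => //=; rewrite eqxx.
Qed.

Lemma XD (R : realFieldType) n m (Q : 'I_n + 'I_m -> 'I_n + 'I_m -> R) j k :
  \sum_p (if Xg p (inr j) == inr k then wX Q p else 0) = MX Q k.
Proof.
rewrite -(pair_bigA _ (fun k' s => if Xg (k', s) (inr j) == inr k then wX Q (k', s) else 0)) /=.
rewrite (bigD1 k) //= [X in _ + X]big1 ?addr0; last first.
  by move=> k' Hk; apply: big1 => s _; rewrite /Xg ffunE /= ?eq_inr (negbTE Hk).
rewrite -[RHS](@MW_tot _ _ (fun l => Q (inl l) (inr k)) (MX Q k)).
by apply: eq_bigr => s _; rewrite /Xg ffunE /= eqxx.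
Qed.

Lemma YA (R : realFieldType) n m (Q : 'I_n + 'I_m -> 'I_n + 'I_m -> R) j j' : j != j' ->
  \sum_p (if Yg p (inr j) == inr j' then wY Q p else 0) = 0.
Proof.
move=> H; apply: big1 => p _; rewrite /Yg ffunE.
by case: (p.2 j) => /=; rewrite ?eq_lr ?eq_inr ?(negbTE H).
Qed.

Lemma YC (R : realFieldType) n m (Q : 'I_n + 'I_m -> 'I_n + 'I_m -> R) j i :
  \sum_p (if Yg p (inl i) == inr j then wY Q p else 0) = 0.
Proof. by apply: big1 => p _; rewrite /Yg ffunE. Qed.

Lemma YB (R : realFieldType) n m (Q : 'I_n + 'I_m -> 'I_n + 'I_m -> R) j k :
  (forall l, 0 <= Q (inr l) (inl k)) ->
  \sum_p (if Yg p (inr j) == inl k then wY Q p else 0) = Q (inr j) (inl k).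
Proof.
move=> H0.
rewrite -(pair_bigA _ (fun k' s => if Yg (k', s) (inr j) == inl k then wY Q (k', s) else 0)) /=.
rewrite (bigD1 k) //= [X in _ + X]big1 ?addr0; last first.
  move=> k' Hk; apply: big1 => s _; rewrite /Yg ffunE /=.
  by case: (s j) => //=; rewrite ?eq_inr ?eq_inl ?eq_lr ?eq_rl (negbTE Hk).
rewrite -[RHS](@MW_marg _ _ (fun l => Q (inr l) (inl k)) (NY Q k) j); last first.
  by move=> l; rewrite H0 /NY le_bigmax.
rewrite [RHS]big_mkcond /=; apply: eq_bigr => s _; rewrite /Yg /wY ffunE /=.
by case: (s j) => //=; rewrite eqxx.
Qed.

Lemma YD (R : realFieldType) n m (Q : 'I_n + 'I_m -> 'I_n + 'I_m -> R) i k :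
  \sum_p (if Yg p (inl i) == inl k then wY Q p else 0) = NY Q k.
Proof.
rewrite -(pair_bigA _ (fun k' s => if Yg (k', s) (inl i) == inl k then wY Q (k', s) else 0)) /=.
rewrite (bigD1 k) //= [X in _ + X]big1 ?addr0; last first.
  by move=> k' Hk; apply: big1 => s _; rewrite /Yg ffunE /= ?eq_inl (negbTE Hk).
rewrite -[RHS](@MW_tot _ _ (fun l => Q (inr l) (inl k)) (NY Q k)).
by apply: eq_bigr => s _; rewrite /Yg ffunE /= eqxx.
Qed.

Lemma sumC1 (R : ringType) (T : finType) (F : T -> R) a :
  \sum_(z in ~: [set a]) F z = \sum_z F z - F a.
Proof.
rewrite [X in _ = X - _](bigD1 a) //= addrC addrK.
by apply: eq_bigl => z; rewrite !inE.
Qed.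

Set Implicit Arguments.
Unset Implicit Arguments.
Theorem mainTheorem12 (R : realFieldType) (n m : nat) (hn : (0 < n)%N) (hm : (0 < m)%N)
  (Q : ('I_n + 'I_m)%type -> ('I_n + 'I_m)%type -> R) :
  is_generator Q -> stoch_monotone_gen (@bip_le n m) Q ->
  realizably_monotone_gen (@bip_le n m) Q.
Proof.
move=> [Hoff Hrow] HM.
have F1 : forall i j k, j != k -> Q (inl i) (inr k) <= Q (inr j) (inr k).
  move=> i j k Hjk.
  have := HM (inl i) (inr j) [set inr k] isT.
  rewrite !big_set1; apply.
    move=> x y Hxy; rewrite !inE => /eqP Hx; subst x.
    by case: y Hxy => //= b /eqP ->.
  by rewrite !inE eq_lr eq_inr (negbTE Hjk).
have F2 : forall i j k, i != k -> Q (inr j) (inl k) <= Q (inl i) (inl k).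
  move=> i j k Hik.
  have := HM (inl i) (inr j) (~: [set inl k]) isT.
  rewrite !sumC1 !Hrow !sub0r lerN2; apply.
    move=> x y Hxy; rewrite !inE.
    by case: x Hxy => a; case: y => b //= /eqP ->.
  by rewrite !inE eq_rl eq_inl (negbTE Hik).
exists (cc Q); split; [|split].
- move=> f; rewrite /cc; apply: addr_ge0; [apply: addr_ge0|];
    apply: sumr_ge0 => p _; apply: mulr_ge0 => //.
  + case: p => u v; rewrite /Jw /rr /=; case: eqP => // /eqP Huv.
    case: u v Huv => [i|j] [k|k] //= Huv; rewrite subr_ge0.
    * apply: bigmax_le; first exact: Hoff.
      by move=> j; apply: F2.
    * apply: bigmax_le; first exact: Hoff.
      by move=> i; apply: F1.
  + apply: mulr_ge0; first exact: bigmax_ge0.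
    apply: Wp_ge0 => i; apply: divr01; first exact: Hoff.
    exact: le_bigmax.
  + apply: mulr_ge0; first exact: bigmax_ge0.
    apply: Wp_ge0 => i; apply: divr01; first exact: Hoff.
    exact: le_bigmax.
- move=> f Hf; rewrite /cc !big1 ?addr0 // => p _.
  + have /negbTE -> : f != Yg p by apply: contraNneq Hf => ->; exact: gY_mono.
    by rewrite mulr0.
  + have /negbTE -> : f != Xg p by apply: contraNneq Hf => ->; exact: gX_mono.
    by rewrite mulr0.
  + case: (eqVneq f (Jg p)) => [E|]; last by rewrite mulr0.
    suff -> : Jw Q p = 0 by rewrite mul0r.
    case: p E => u v /= E; rewrite /Jw /rr /=; case: eqP => // _.
    case: u v E => [i|j] [k|k] //= E; exfalso; move: Hf; rewrite E /Jg /=;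
      by rewrite jmp_mono.
- move=> u v Huv; rewrite /cc !big_split /= !sum_induced J_val //.
  case: u v Huv => [i|j] [k|k] Huv; rewrite /rr (negbTE Huv) /=.
  + by rewrite XA // YD addr0 subrK.
  + by rewrite XB ?YC ?addr0 ?add0r // => l; apply: Hoff.
  + by rewrite XC YB ?add0r // => l; apply: Hoff.
  + by rewrite XD YA // addr0 subrK.
Qed.
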